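(* Let $G$ be a graph on $n$ vertices with $\alpha(G)=2$. Then $\xi_f(G)\ge \frac{n}{2}$.
   Context: $\alpha(G)$ is the independence number. For positive integers $d,r$, a $d/r$-representation of a graph $G=(V,E)$ is a collection $\{P_v\}_{v\in V}$ of $d\times d$ orthogonal projectors, each of rank $r$, such that $P_vP_w=0$ for every edge $vw\in E$. The projective rank is $\xi_f(G)=\inf\{d/r : G \text{ has a } d/r\text{-representation}\}$. *)

(* Defs.v *)
From HB Require Import structures.
From mathcomp Require Import all_boot all_order all_algebra.
From mathcomp Require Import boolp classical_sets reals.
From mathcomp Require Import complex.
Set Implicit Arguments. Unset Strict Implicit. Unset Printing Implicit Defensive.
Import Order.TTheory GRing.Theory Num.Theory.
Local Open Scope ring_scope.
Local Open Scope complex_scope.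

Definition simple_graph (T : finType) (e : rel T) : Prop :=
  symmetric e /\ irreflexive e.

Definition independent (T : finType) (e : rel T) (S : {set T}) : bool :=
  [forall x in S, forall y in S, ~~ e x y].

Definition independence_number (T : finType) (e : rel T) : nat :=
  \max_(S : {set T} | independent e S) #|S|.

Definition adjmx (R : rcfType) (d : nat) (A : 'M[R[i]]_d) : 'M[R[i]]_d :=
  (map_mx (@conjc R) A)^T.

Definition orth_projector (R : rcfType) (d : nat) (P : 'M[R[i]]_d) : Prop :=
  P *m P = P /\ adjmx P = P.

Definition dr_representation (R : rcfType) (T : finType) (e : rel T)
    (d r : nat) (P : T -> 'M[R[i]]_d) : Prop :=
  (forall v, orth_projector (P v) /\ \rank (P v) = r) /\
  (forall v w, e v w -> P v *m P w = 0).

Definition projective_rank (R : realType) (T : finType) (e : rel T) : R :=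
  inf [set x : R | exists d r : nat, [/\ (0 < d)%N, (0 < r)%N,
         x = d%:R / r%:R &
         exists P : T -> 'M[R[i]]_d, @dr_representation R T e d r P]].

(* Main.v *)
Require Import Defs.
From HB Require Import structures.
From mathcomp Require Import all_boot all_order all_algebra.
From mathcomp Require Import boolp classical_sets reals.
From mathcomp Require Import complex.
From mathcomp Require Import ring zify.
Import Order.TTheory GRing.Theory Num.Theory.
Local Open Scope ring_scope.

Lemma adjmxM (R : rcfType) d (A B : 'M[R[i]]_d) : adjmx (A *m B) = adjmx B *m adjmx A.
Proof. by rewrite /adjmx map_mxM trmx_mul. Qed.

Lemma tr_adj_ge0 (R : rcfType) d (M : 'M[R[i]]_d) : 0 <= \tr (adjmx M *m M).
Proof.
rewrite /mxtrace; apply: sumr_ge0 => i _; rewrite mxE; apply: sumr_ge0 => k _.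
by rewrite !mxE mulrC; apply: mulcJ_ge0.
Qed.

Lemma adj_herm (R : rcfType) (T : finType) d (P : T -> 'M[R[i]]_d) (c : nat) :
  (forall v, adjmx (P v) = P v) ->
  adjmx (\sum_v P v - c%:R%:M) = \sum_v P v - c%:R%:M.
Proof.
move=> H; apply/matrixP => i j.
rewrite /adjmx !mxE rmorphB /= !summxE rmorph_sum /=.
congr (_ - _).
  apply: eq_bigr => v _; have := congr1 (fun M : 'M[R[i]]_d => M i j) (H v).
  by rewrite /adjmx !mxE.
by rewrite rmorphMn /= conjc_nat eq_sym.
Qed.

Lemma tr_idem (F : fieldType) d (P : 'M[F]_d) : P *m P = P -> \tr P = (\rank P)%:R.
Proof.
move=> PP.
have hC : row_free (col_base P)^T.
  by rewrite /row_free mxrank_tr; have := col_base_full P; rewrite /row_full.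
have hB := row_base_free P.
have eP := mulmx_base P.
move: hC hB eP; move: (col_base P) (row_base P) => C B hC hB eP.
have e1 : C *m B *m C = C.
  apply: (row_free_inj hB) => /=.
  by rewrite -mulmxA eP PP.
have e2 : B *m C = 1%:M.
  apply: trmx_inj; rewrite trmx1; apply: (row_free_inj hC) => /=.
  by rewrite -trmx_mul mulmxA e1 mul1mx.
by rewrite -{1}eP mxtrace_mulC e2 mxtrace1.
Qed.

Lemma key (R : rcfType) (T : finType) (e : rel T) d r (P : T -> 'M[R[i]]_d) :
  symmetric e ->
  (forall v w w', w != v -> w' != v -> w' != w -> ~~ e v w -> ~~ e v w' -> e w w') ->
  @dr_representation R T e d r P -> (#|T| * r <= 2 * d)%N.
Proof.
move=> sym tri [hP hE].
have PP v : P v *m P v = P v := (hP v).1.1.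
have Padj v : adjmx (P v) = P v := (hP v).1.2.
have trP v : \tr (P v) = r%:R by rewrite tr_idem // (hP v).2.
have E0 v w : e v w -> P v *m P w = 0 := hE v w.
set A := \sum_v P v.
have loc v : \tr (P v *m A *m A) - 3%:R * \tr (P v *m A) + 2%:R * \tr (P v) = 0.
  pose W := \sum_(w | (w != v) && ~~ e v w) P w.
  pose E := \sum_(w | (w != v) && e v w) P w.
  have hA : A = P v + W + E.
    by rewrite /A (bigD1 v) //= (bigID (fun w => e v w)) /= [E + W]addrC addrA.
  have PE : P v *m E = 0.
    by rewrite mulmx_sumr big1 // => w /andP[_ h]; apply: E0.
  have EP : E *m P v = 0.
    by rewrite mulmx_suml big1 // => w /andP[_ h]; apply: E0; rewrite sym.
  have WW : W *m W = W.
    rewrite {1}/W mulmx_suml; apply: eq_bigr => w /andP[wv ew].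
    rewrite /W mulmx_sumr (bigD1 w) /=; last by rewrite wv ew.
    rewrite PP big1 ?addr0 // => w' /andP[/andP[w'v ew'] w'w].
    by apply: E0; apply: tri ew ew'.
  have AP : A *m P v = P v + W *m P v by rewrite hA !mulmxDl PP EP addr0.
  have PA : P v *m A = P v + P v *m W by rewrite hA !mulmxDr PP PE addr0.
  have h1 : \tr (P v *m A) = r%:R + \tr (P v *m W) by rewrite PA mxtraceD trP.
  have h2 : \tr (P v *m A *m A) = r%:R + 3%:R * \tr (P v *m W).
    rewrite mxtrace_mulC.
    have -> : A *m (P v *m A) = (A *m P v) *m (P v *m A).
      by rewrite !mulmxA -(mulmxA A (P v) (P v)) PP.
    rewrite AP PA mulmxDl !mulmxDr mulmxA PP -mulmxA PP.
    rewrite -(mulmxA W) (mulmxA (P v)) PP.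
    rewrite !mxtraceD trP (mxtrace_mulC W (P v)).
    rewrite mulmxA (mxtrace_mulC (W *m P v) W) mulmxA WW (mxtrace_mulC W (P v)).
    ring.
  by rewrite h2 h1 trP; ring.
have T1 : \tr A = (#|T| * r)%:R.
  rewrite /A raddf_sum (eq_bigr _ (fun v _ => trP v)) sumr_const natrM mulrC mulr_natr.
  by congr (_ *+ _); apply: eq_card.
have T2 : \tr (A *m A) = \sum_v \tr (P v *m A).
  by rewrite {1}/A mulmx_suml raddf_sum.
have T3 : \tr (A *m A *m A) = \sum_v \tr (P v *m A *m A).
  by rewrite {1}/A !mulmx_suml raddf_sum.
have S0 : \tr (A *m A *m A) - 3%:R * \tr (A *m A) + 2%:R * \tr A = 0.
  rewrite T3 T2 /A raddf_sum !mulr_sumr -sumrB -big_split /=.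
  by apply: big1 => v _; apply: loc.
pose B := A - 2%:R%:M.
have hB : adjmx B = B by apply: adj_herm.
have N1 : 0 <= \tr (B *m B) + \tr (B *m A *m B).
  apply: addr_ge0; first by rewrite -{1}hB tr_adj_ge0.
  rewrite {1}/A mulmx_sumr mulmx_suml raddf_sum; apply: sumr_ge0 => v _.
  have -> : B *m P v *m B = adjmx (P v *m B) *m (P v *m B).
    by rewrite adjmxM hB Padj mulmxA -(mulmxA B (P v) (P v)) PP.
  exact: tr_adj_ge0.
have N2 : \tr (B *m B) + \tr (B *m A *m B) =
   \tr (A *m A *m A) - 3%:R * \tr (A *m A) + 4%:R * d%:R.
  rewrite /B !mulmxBl !mulmxBr !mul_scalar_mx !mul_mx_scalar.
  rewrite !raddfB /= !mxtraceZ mxtrace_scalar.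
  by rewrite -scalemxAl mxtraceZ -mulr_natr; ring.
have X3 : \tr (A *m A *m A) = 3%:R * \tr (A *m A) - 2%:R * \tr A.
  by apply/eqP; rewrite -subr_eq0 -S0; apply/eqP; ring.
move: N1; rewrite N2 X3 T1.
have -> : 3%:R * \tr (A *m A) - 2%:R * (#|T| * r)%:R - 3%:R * \tr (A *m A) + 4%:R * d%:R
   = 4%:R * d%:R - 2%:R * (#|T| * r)%:R :> R[i] by ring.
rewrite subr_ge0 -!natrM ler_nat => h.
lia.
Qed.

Lemma tri_lemma (T : finType) (e : rel T) : simple_graph e -> independence_number e = 2%N ->
  forall v w w', w != v -> w' != v -> w' != w -> ~~ e v w -> ~~ e v w' -> e w w'.
Proof.
move=> [sym irr] hI v w w' wv w'v w'w evw evw'.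
apply/negPn/negP => eww'.
have ind : independent e [set v; w; w'].
  apply/forallP => x; apply/implyP; rewrite !inE => /orP[/orP[]|] /eqP ->;
  apply/forallP => y; apply/implyP; rewrite !inE => /orP[/orP[]|] /eqP ->;
  by rewrite ?irr ?evw ?evw' ?eww' // sym ?evw ?evw' ?eww'.
have := @leq_bigmax_cond _ (fun S => independent e S) (fun S => #|S|) _ ind.
rewrite -/(independence_number e) hI finset.setUC cardsU1 cardsU1 cards1 !inE.
by rewrite (negbTE w'v) (negbTE w'w) eq_sym wv.
Qed.

Theorem proposition1p6 (R : realType) (T : finType) (e : rel T) :
  simple_graph e ->
  independence_number e = 2%N ->
  (#|T|%:R / 2%:R : R) <= projective_rank R e.
Proof.
move=> G hI.
have tri := @tri_lemma T e G hI.
case: G => sym irr.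
have n2 : (2 <= #|T|)%N by rewrite -hI; apply/bigmax_leqP => S _; apply: max_card.
apply: lb_le_inf.
  exists (#|T|%:R / 1%:R); exists #|T|, 1%N; split => //; first by lia.
  exists (fun v => delta_mx (enum_rank v) (enum_rank v)); split.
    move=> v; split; [split|]; first by rewrite mul_delta_mx.
      by apply/matrixP => i j; rewrite /adjmx !mxE conjc_nat andbC.
    by rewrite mxrank_delta.
  move=> v w evw; apply: mul_delta_mx_0; rewrite (inj_eq enum_rank_inj).
  by apply/eqP => vw; move: evw; rewrite vw irr.
move=> x [d [r [d0 r0 -> [P hP]]]].
have := @key R T e d r P sym tri hP.
rewrite ler_pdivlMr ?ltr0n // mulrAC ler_pdivrMr ?ltr0n // -!natrM ler_nat => h.
lia.
Qed.
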